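(* Let $n\ge 1$, let $n_0>0$ and $N_+\in\mathbb{R}^n$ with positive entries, let $M_1>0$, and let $L\in\mathbb{R}^n$ have finite entries. For $A\in\mathbb{R}^n$ set $a_0(A)=M_1-\mathbf{1}^\top A$, $b_0(A)=n_0-a_0(A)$, $B(A)=N_+-A$, and $$G(A)=-L^\top A+f(a_0(A))+\sum_{i=1}^n f(B_i(A))+\sum_{i=1}^n f(A_i)+f(b_0(A)),$$ where $f(x)=x\log x-x$ for $x>0$ and $f(0)=0$. Let $\mathcal{D}=\{A\in\mathbb{R}^n: 0\le A\le N_+ \text{ componentwise},\ a_0(A)\ge 0,\ b_0(A)\ge 0\}$ be the domain of $G$. Suppose that some $A\in\mathbb{R}^n$ satisfies $N_+>A$ componentwise, $M_1>\mathbf{1}^\top A$, and $n_0>a_0(A)$. Then $G$ has a unique global minimizer on $\mathcal{D}$.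
   Context: This is the Greenland–Longnecker pseudo-count problem for log odds ratios: $n$ alternative exposure levels, $n_0$ total subjects at the reference exposure, $N_+$ total subjects at the alternative exposures, $M_1$ total cases, $L$ reported log odds ratios; $A$ are pseudo-cases at alternative exposures, $a_0$ pseudo-cases at the reference exposure, $B$ and $b_0$ the corresponding non-cases. The gradient of $G$ is $g(A)=-L-\log(a_0(A))\mathbf{1}-\log(B(A))+\log(A)+\log(b_0(A))\mathbf{1}$ (componentwise logarithms), whose root the Greenland–Longnecker Newton method seeks. $\mathbf{1}$ denotes the all-ones vector in $\mathbb{R}^n$. *)

(* Defs.v *)
From mathcomp Require Import all_boot all_order all_algebra.
From mathcomp Require Import all_classical all_reals all_analysis.
Set Implicit Arguments. Unset Strict Implicit. Unset Printing Implicit Defensive.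
Import Order.TTheory GRing.Theory Num.Theory.
Local Open Scope ring_scope.

Section GL.
Variables (R : realType) (n : nat).

(* f(x) = x log x - x for x > 0, f(0) = 0 (value for x < 0 is irrelevant on
   the domain; we set it to 0). *)
Definition fGL (x : R) : R := if 0 < x then x * ln x - x else 0.

Definition a0 (M1 : R) (A : 'I_n -> R) : R := M1 - \sum_i A i.
Definition b0 (n0 M1 : R) (A : 'I_n -> R) : R := n0 - a0 M1 A.
Definition Bv (Np : 'I_n -> R) (A : 'I_n -> R) : 'I_n -> R := fun i => Np i - A i.

Definition G (n0 M1 : R) (Np L : 'I_n -> R) (A : 'I_n -> R) : R :=
  - (\sum_i L i * A i) + fGL (a0 M1 A)
  + (\sum_i fGL (Bv Np A i)) + (\sum_i fGL (A i)) + fGL (b0 n0 M1 A).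

Definition domD (n0 M1 : R) (Np : 'I_n -> R) (A : 'I_n -> R) : Prop :=
  (forall i, 0 <= A i /\ A i <= Np i) /\ 0 <= a0 M1 A /\ 0 <= b0 n0 M1 A.

End GL.

(* Main.v *)
Require Import Defs.
From mathcomp Require Import all_boot all_order all_algebra.
From mathcomp Require Import all_classical all_reals all_analysis.
From mathcomp Require Import ring lra.
Import Order.TTheory GRing.Theory Num.Theory.
Import numFieldNormedType.Exports.
Local Open Scope ring_scope.
Section Conv.
Variable R : realType.

Lemma ln_ineq (u m : R) : 0 < u -> 0 < m -> u - m <= u * ln u - u * ln m.
Proof.
move=> hu hm.
have hz : 0 < m / u by exact: divr_gt0.
have h : ln (m / u) <= m / u - 1.
  have e1 : 1 + (m / u - 1) = m / u by lra.
  have := @le_ln1Dx R (m / u - 1); rewrite e1; apply; lra.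
rewrite ln_div ?posrE // in h.
have h2 : u * (ln m - ln u) <= u * (m / u - 1) by rewrite ler_pM2l.
have e2 : u * (m / u - 1) = m - u by field; rewrite gt_eqF.
rewrite e2 in h2; lra.
Qed.

Lemma ln_ineq_lt (u m : R) : 0 < u -> 0 < m -> u != m -> u - m < u * ln u - u * ln m.
Proof.
move=> hu hm um.
have hz : 0 < m / u by exact: divr_gt0.
have h : ln (m / u) < m / u - 1.
  have hne : ln (m / u) != 0.
    rewrite ln_eq0 //; apply/eqP => e; move/eqP: um; apply.
    by move: e => /(congr1 (fun t => t * u)); rewrite mul1r divfK ?gt_eqF // => ->.
  have := expR_gt1Dx hne; rewrite lnK ?posrE //; lra.
rewrite ln_div ?posrE // in h.
have h2 : u * (ln m - ln u) < u * (m / u - 1) by rewrite ltr_pM2l.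
have e2 : u * (m / u - 1) = m - u by field; rewrite gt_eqF.
rewrite e2 in h2; lra.
Qed.

Lemma fmid_lt (x y : R) : 0 <= x -> 0 <= y -> x != y ->
  2 * fGL ((x + y) / 2) < fGL x + fGL y.
Proof.
rewrite le_eqVlt => /orP[/eqP hx|hx]; rewrite le_eqVlt => /orP[/eqP hy|hy] xy.
- by move: xy; rewrite -hx -hy eqxx.
- rewrite -hx add0r /fGL ltxx divr_gt0 // hy add0r.
  have h1 : ln (y / 2) < ln y.
    by rewrite ltr_ln ?posrE ?divr_gt0 //; lra.
  have h2 : y * ln (y / 2) < y * ln y by rewrite ltr_pM2l.
  have -> : 2 * (y / 2 * ln (y / 2) - y / 2) = y * ln (y / 2) - y by field.
  lra.
- rewrite -hy addr0 /fGL ltxx divr_gt0 // hx addr0.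
  have h1 : ln (x / 2) < ln x.
    by rewrite ltr_ln ?posrE ?divr_gt0 //; lra.
  have h2 : x * ln (x / 2) < x * ln x by rewrite ltr_pM2l.
  have -> : 2 * (x / 2 * ln (x / 2) - x / 2) = x * ln (x / 2) - x by field.
  lra.
- have hm : 0 < (x + y) / 2 by rewrite divr_gt0 // addr_gt0.
  rewrite /fGL hm hx hy.
  set m := (x + y) / 2 in hm *.
  have xm : x != m by apply/eqP => e; move/eqP: xy; apply; rewrite /m in e; lra.
  have h1 := ln_ineq_lt x m hx hm xm.
  have h2 := ln_ineq y m hy hm.
  have e : m = (x + y) / 2 by [].
  set lm := ln m in h1 h2 *.
  rewrite e in h1 h2 *; lra.
Qed.

Lemma fmid (x y : R) : 0 <= x -> 0 <= y ->
  2 * fGL ((x + y) / 2) <= fGL x + fGL y.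
Proof.
move=> hx hy; have [->|xy] := eqVneq x y; last exact/ltW/fmid_lt.
have -> : (y + y) / 2 = y by field.
lra.
Qed.
End Conv.

Section Cont.
Variable R : realType.

Lemma tlnt_bound (t : R) : 0 < t -> t < 1 -> (t * ln t) ^+ 2 <= 2 * t.
Proof.
move=> t0 t1.
have u0 : 0 <= - ln t by rewrite oppr_ge0 ln_le0 // ltW.
have := expR_ge1Dxn 1 u0.
rewrite expRN lnK ?posrE //.
have -> : (2`!)%:R = 2 :> R by [].
move: u0; move: (ln t) => l u0 h.
have h3 : t * (l ^+ 2) * t <= 2 * t.
  have : l ^+ 2 <= 2 * t^-1.
    have -> : l ^+ 2 = (- l) ^+ 2 by ring.
    lra.
  rewrite -(ler_pM2l t0) -(ler_pM2r t0) => h4.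
  apply: (le_trans h4); rewrite mulrCA divff ?mulr1 ?gt_eqF //.
have -> : (t * l) ^+ 2 = t * l ^+ 2 * t by ring.
exact: h3.
Qed.

Lemma fGL_cont (x : R) : {for x, continuous (fun y : R => @fGL R y)}.
Proof.
case: (ltgtP x 0) => hx.
- apply: cvg_near_cst; near=> y.
  have : y < 0 by near: y; exact: lt_nbhsl.
  by move=> y0; rewrite /fGL ltNge (ltW y0) ltNge (ltW hx).
- have hc : {for x, continuous (fun y : R => y * ln y - y)}.
    apply: cvgB; last exact: cvg_id.
    apply: cvgM; first exact: cvg_id.
    exact: continuous_ln.
  rewrite /prop_for /continuous_at /=.
  have -> : fGL x = x * ln x - x by rewrite /fGL hx.
  apply: cvg_trans hc; apply: near_eq_cvg; near=> y.
  have : 0 < y by near: y; exact: lt_nbhsr.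
  by move=> y0; rewrite /fGL y0.
- rewrite /prop_for /continuous_at /= hx.
  have -> : fGL 0 = 0 :> R by rewrite /fGL ltxx.
  apply/cvgrPdist_lt => e e0.
  near=> t.
  have ht1 : t < 1 by near: t; exact: lt_nbhsl.
  have ht2 : t < e ^+ 2 / 8 by near: t; apply: lt_nbhsl; rewrite divr_gt0 // exprn_gt0.
  have ht3 : t < e / 2 by near: t; apply: lt_nbhsl; rewrite divr_gt0.
  rewrite sub0r normrN /fGL.
  case: ifPn => t0; last by rewrite normr0.
  have hb := tlnt_bound t t0 ht1.
  have hl : t * ln t <= 0 by rewrite pmulr_rle0 // ln_le0 // ltW.
  have hl2 : - (t * ln t) < e / 2.
    rewrite ltNge; apply/negP => hc.
    have : (e / 2) ^+ 2 <= (t * ln t) ^+ 2.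
      have -> : (t * ln t) ^+ 2 = (- (t * ln t)) ^+ 2 by ring.
      have ea : 0 < e / 2 by rewrite divr_gt0.
      move: hc ea; move: (- (t * ln t)) => a; move: (e / 2) => b hc hb0; nra.
    have -> : (e / 2) ^+ 2 = 2 * (e ^+ 2 / 8) by field.
    lra.
  rewrite ler0_norm; last lra.
  lra.
Unshelve. all: by end_near.
Qed.
End Cont.

Section Main.
Local Open Scope classical_set_scope.
Import ArrowAsProduct.
Variables (R : realType) (n : nat) (n0 M1 : R) (Np L : 'I_n -> R).

Lemma proj_cont (i : 'I_n) : continuous (fun f : 'I_n -> R => f i).
Proof. exact: (@proj_continuous 'I_n (fun _ => R) i). Qed.


Lemma sum_cont (F : 'I_n -> ('I_n -> R) -> R) :
  (forall i, continuous (F i)) -> continuous (fun x => \sum_i F i x).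
Proof.
move=> hF x.
suff : forall r : seq 'I_n, {for x, continuous (fun y => \sum_(i <- r) F i y)} by apply.
elim=> [|j r IH].
  have -> : (fun y : 'I_n -> R => \sum_(i <- [::]) F i y) = (fun _ => 0).
    by apply/funext => y; rewrite big_nil.
  exact: cst_continuous.
have -> : (fun y : 'I_n -> R => \sum_(i <- j :: r) F i y) = (fun y => F j y + \sum_(i <- r) F i y).
  by apply/funext => y; rewrite big_cons.
exact (continuousD (hF j x) IH).
Qed.


Lemma a0_cont : continuous (fun f : 'I_n -> R => a0 M1 f).
Proof.
move=> x.
exact (continuousB (@cst_continuous _ _ M1 x) (sum_cont (fun i f => f i) proj_cont x)).
Qed.

Lemma b0_cont : continuous (fun f : 'I_n -> R => b0 n0 M1 f).
Proof.
move=> x.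
exact (continuousB (@cst_continuous _ _ n0 x) (a0_cont x)).
Qed.

Lemma fcomp_cont (g : ('I_n -> R) -> R) : continuous g ->
  continuous (fun f => fGL (g f)).
Proof.
move=> hg x.
exact (@continuous_comp _ _ _ g (@fGL R) x (hg x) (@fGL_cont R (g x))).
Qed.

Lemma G_cont : continuous (fun f : 'I_n -> R => G n0 M1 Np L f).
Proof.
move=> x.
have hL : continuous (fun f : 'I_n -> R => \sum_i L i * f i).
  apply: (sum_cont (fun i f => L i * f i)) => i y.
  exact (continuousM (@cst_continuous _ _ (L i) y) (proj_cont i y)).
have hB : continuous (fun f : 'I_n -> R => \sum_i fGL (Bv Np f i)).
  apply: (sum_cont (fun i f => fGL (Bv Np f i))) => i.
  apply: (fcomp_cont (fun f => Bv Np f i)) => y.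
  exact (continuousB (@cst_continuous _ _ (Np i) y) (proj_cont i y)).
have hA : continuous (fun f : 'I_n -> R => \sum_i fGL (f i)).
  apply: (sum_cont (fun i f => fGL (f i))) => i.
  exact: (fcomp_cont (fun f => f i) (proj_cont i)).
exact (continuousD (continuousD (continuousD (continuousD (continuousN (hL x))
   (fcomp_cont (a0 M1) a0_cont x)) (hB x)) (hA x)) (fcomp_cont (b0 n0 M1) b0_cont x)).
Qed.

Lemma has_ord (hn : (0 < n)%N) : has (fun _ : 'I_n => true) (index_enum 'I_n).
Proof. by apply/hasP; exists (Ordinal hn) => //; rewrite mem_index_enum. Qed.

Lemma exists_min (hn : (0 < n)%N) (hn0 : 0 < n0) (hNp : forall i, 0 < Np i)
  (hM1 : 0 < M1)
  (hfeas : exists A : 'I_n -> R,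
      (forall i, A i < Np i) /\ \sum_i A i < M1 /\ a0 M1 A < n0) :
  exists2 c, domD n0 M1 Np c &
    forall A, domD n0 M1 Np A -> G n0 M1 Np L c <= G n0 M1 Np L A.
Proof.
pose D := [set f : 'I_n -> R | forall i, `[0, Np i]%classic (f i)] `&`
  ([set f | 0 <= a0 M1 f] `&` [set f | 0 <= b0 n0 M1 f]).
have DE : forall f, D f <-> domD n0 M1 Np f.
  move=> f; split.
    by move=> [/= h1 [/= h2 h3]]; split=> // i; move: (h1 i); rewrite /= in_itv /= => /andP.
  move=> [h1 [h2 h3]]; split; last by split.
  by move=> i /=; rewrite in_itv /=; apply/andP; exact: h1.
have cD : compact D.
  apply: compact_closedI.
    exact: (@tychonoff 'I_n (fun _ => R) (fun i => `[0, Np i]%classic)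
              (fun i => @segment_compact R 0 (Np i))).
  apply: closedI.
    exact (@preimage_closed _ _ (a0 M1) [set x : R | 0 <= x] (fun x _ => a0_cont x) (@closed_ge R 0)).
  exact (@preimage_closed _ _ (b0 n0 M1) [set x : R | 0 <= x] (fun x _ => b0_cont x) (@closed_ge R 0)).
have D0 : D !=set0.
  case: hfeas => A [hA [hsA ha0]].
  have hS : \sum_i A i < \sum_i Np i.
    by apply: ltr_sum; [exact: has_ord | move=> i _; exact: hA].
  have S0 : 0 < \sum_i Np i.
    have := @ltr_sum R _ (index_enum 'I_n) (fun _ => true) (fun _ => 0) Np (has_ord hn) (fun i _ => hNp i).
    by rewrite big1.
  move: hS S0 ha0; rewrite /a0; set S := \sum_i Np i => hS S0 ha0.
  case: (lerP S M1) => hSM.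
    exists Np; apply/DE; split; first by move=> i; split=> //; exact: ltW.
    rewrite /b0 /a0 -/S; split; lra.
  exists (fun i => Np i * (M1 / S)); apply/DE.
  have hq0 : 0 < M1 / S by exact: divr_gt0.
  have hq1 : M1 / S <= 1 by rewrite ler_pdivrMr // mul1r ltW.
  have hsum : \sum_i Np i * (M1 / S) = M1.
    by rewrite -mulr_suml -/S mulrCA divff ?mulr1 // gt_eqF.
  split.
    move=> i; split; first by rewrite mulr_ge0 // ltW.
    by rewrite ler_piMr // ltW.
  by rewrite /b0 /a0 hsum; split; lra.
have := compact_EVT_min D0 cD (continuous_subspaceT G_cont).
move=> [c cD' hc]; exists c; first by apply/DE; exact: set_mem cD'.
move=> A hA; apply: hc; apply: mem_set; exact/DE.
Qed.
End Main.

Section Uniq.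
Variables (R : realType) (n : nat) (n0 M1 : R) (Np L : 'I_n -> R).

Definition midf (A B : 'I_n -> R) : 'I_n -> R := fun j => (A j + B j) / 2.

Lemma sum_mid (A B : 'I_n -> R) :
  \sum_j midf A B j = (\sum_j A j + \sum_j B j) / 2.
Proof. by rewrite /midf -mulr_suml big_split. Qed.

Lemma a0_mid A B : a0 M1 (midf A B) = (a0 M1 A + a0 M1 B) / 2.
Proof. rewrite /a0 sum_mid; lra. Qed.

Lemma b0_mid A B : b0 n0 M1 (midf A B) = (b0 n0 M1 A + b0 n0 M1 B) / 2.
Proof. rewrite /b0 a0_mid; lra. Qed.

Lemma Bv_mid A B j : Bv Np (midf A B) j = (Bv Np A j + Bv Np B j) / 2.
Proof. rewrite /Bv /midf; lra. Qed.

Lemma mid_dom A B : domD n0 M1 Np A -> domD n0 M1 Np B -> domD n0 M1 Np (midf A B).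
Proof.
move=> [hA [hA1 hA2]] [hB [hB1 hB2]]; split.
  move=> j; have [h1 h2] := hA j; have [h3 h4] := hB j; rewrite /midf; split; lra.
by rewrite a0_mid b0_mid; split; lra.
Qed.

Lemma G_mid_lt A B i : domD n0 M1 Np A -> domD n0 M1 Np B -> A i != B i ->
  2 * G n0 M1 Np L (midf A B) < G n0 M1 Np L A + G n0 M1 Np L B.
Proof.
move=> [hA [hA1 hA2]] [hB [hB1 hB2]] hne.
have eL : 2 * (\sum_j L j * midf A B j) = \sum_j L j * A j + \sum_j L j * B j.
  by rewrite mulr_sumr -big_split; apply: eq_bigr => j _ /=; rewrite /midf; field.
have h1 : 2 * fGL (a0 M1 (midf A B)) <= fGL (a0 M1 A) + fGL (a0 M1 B).
  by rewrite a0_mid; apply: fmid.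
have h4 : 2 * fGL (b0 n0 M1 (midf A B)) <= fGL (b0 n0 M1 A) + fGL (b0 n0 M1 B).
  by rewrite b0_mid; apply: fmid.
have h2 : 2 * (\sum_j fGL (Bv Np (midf A B) j)) <=
    \sum_j fGL (Bv Np A j) + \sum_j fGL (Bv Np B j).
  rewrite mulr_sumr -big_split; apply: ler_sum => k _ /=; rewrite Bv_mid.
  have [a1 a2] := hA k; have [b1 b2] := hB k.
  by apply: fmid; rewrite /Bv subr_ge0.
have h3 : 2 * (\sum_j fGL (midf A B j)) <
    \sum_j fGL (A j) + \sum_j fGL (B j).
  rewrite mulr_sumr -big_split /= (bigD1 i) //= [X in _ < X](bigD1 i) //=.
  apply: ltr_leD.
    have [a1 a2] := hA i; have [b1 b2] := hB i.
    exact: fmid_lt.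
  apply: ler_sum => k _ /=.
  have [a1 a2] := hA k; have [b1 b2] := hB k.
  exact: fmid.
rewrite /G; lra.
Qed.
End Uniq.

Theorem theorem1 (R : realType) (n : nat) (hn : (0 < n)%N)
  (n0 M1 : R) (Np L : 'I_n -> R)
  (hn0 : 0 < n0) (hNp : forall i, 0 < Np i) (hM1 : 0 < M1)
  (hfeas : exists A : 'I_n -> R,
      (forall i, A i < Np i) /\ \sum_i A i < M1 /\ a0 M1 A < n0) :
  exists A : 'I_n -> R,
    domD n0 M1 Np A /\
    (forall A' : 'I_n -> R, domD n0 M1 Np A' -> G n0 M1 Np L A <= G n0 M1 Np L A') /\
    (forall A' : 'I_n -> R, domD n0 M1 Np A' ->
       (forall A'' : 'I_n -> R, domD n0 M1 Np A'' -> G n0 M1 Np L A' <= G n0 M1 Np L A'') ->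
       A' = A).
Proof.
have [c hc hmin] := @exists_min R n n0 M1 Np L hn hn0 hNp hM1 hfeas.
exists c; split; first exact: hc.
split; first exact: hmin.
move=> A' hA' hmin'.
apply: funext => i.
case: (eqVneq (A' i) (c i)) => // hne.
have hlt := @G_mid_lt R n n0 M1 Np L A' c i hA' hc hne.
have hm := @mid_dom R n n0 M1 Np A' c hA' hc.
have := hmin _ hm; have := hmin' _ hm.
lra.
Qed.
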